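(* Let $\alpha,\beta,\mu\in\mathbb{R}\setminus\{0\}$ with $\Delta:=\alpha^2+\beta^2-2\mu^2>0$, let $x_1,x_2\in\mathbb{R}$, and let $B_\mu=B_{\alpha,\beta,\mu}(t,x;x_1,x_2)$ be the Gardner breather. Then for every fixed $t\in\mathbb{R}$, $B_\mu$ satisfies, as a function of $x$, the nonlinear stationary equation $$B_{\mu,4x}-2(\beta^2-\alpha^2)\big(B_{\mu,xx}+3\mu B_\mu^2+B_\mu^3\big)+(\alpha^2+\beta^2)^2B_\mu+5B_\mu B_{\mu,x}^2+5B_\mu^2B_{\mu,xx}+\tfrac32 B_\mu^5+5\mu B_{\mu,x}^2+10\mu B_\mu B_{\mu,xx}+10\mu^2B_\mu^3+\tfrac{15}{2}\mu B_\mu^4=0,$$ where subscripts $x$, $xx$, $4x$ denote spatial derivatives.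
   Context: Gardner breathers: for $\alpha,\beta,\mu\in\mathbb{R}\setminus\{0\}$ with $\Delta>0$ and $x_1,x_2\in\mathbb{R}$, set $\delta:=\alpha^2-3\beta^2$, $\gamma:=3\alpha^2-\beta^2$, $y_1:=x+\delta t+x_1$, $y_2:=x+\gamma t+x_2$, $$G_\mu(t,x):=\frac{\beta\sqrt{\alpha^2+\beta^2}}{\alpha\sqrt{\Delta}}\sin(\alpha y_1)-\frac{\sqrt2\,\mu\beta\, e^{\beta y_2}}{\Delta},\qquad F_\mu(t,x):=\cosh(\beta y_2)-\frac{\sqrt2\,\mu\beta\,[\alpha\cos(\alpha y_1)-\beta\sin(\alpha y_1)]}{\alpha\sqrt{\alpha^2+\beta^2}\sqrt{\Delta}},$$ and $B_{\alpha,\beta,\mu}(t,x;x_1,x_2):=2\sqrt2\,\partial_x[\arctan(G_\mu/F_\mu)]=2\sqrt2\,\frac{F_\mu\partial_xG_\mu-G_\mu\partial_xF_\mu}{F_\mu^2+G_\mu^2}$. It is a real smooth solution of the Gardner equation $w_t+(w_{xx}+3\mu w^2+w^3)_x=0$. *)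

(* Defs.v *)
From Stdlib Require Import Reals.
From Coquelicot Require Import Coquelicot.
Open Scope R_scope.

Definition gDelta (a b mu : R) : R := a ^ 2 + b ^ 2 - 2 * mu ^ 2.

Definition gG (a b mu x1 x2 t x : R) : R :=
  let y1 := x + (a ^ 2 - 3 * b ^ 2) * t + x1 in
  let y2 := x + (3 * a ^ 2 - b ^ 2) * t + x2 in
  b * sqrt (a ^ 2 + b ^ 2) / (a * sqrt (gDelta a b mu)) * sin (a * y1)
  - sqrt 2 * mu * b * exp (b * y2) / gDelta a b mu.

Definition gF (a b mu x1 x2 t x : R) : R :=
  let y1 := x + (a ^ 2 - 3 * b ^ 2) * t + x1 in
  let y2 := x + (3 * a ^ 2 - b ^ 2) * t + x2 in
  cosh (b * y2)
  - sqrt 2 * mu * b * (a * cos (a * y1) - b * sin (a * y1))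
    / (a * sqrt (a ^ 2 + b ^ 2) * sqrt (gDelta a b mu)).

Definition breather (a b mu x1 x2 t x : R) : R :=
  let F := gF a b mu x1 x2 t in
  let G := gG a b mu x1 x2 t in
  2 * sqrt 2 * (F x * Derive G x - G x * Derive F x) / (F x ^ 2 + G x ^ 2).

(* Main.v *)
Require Import Defs.
From Stdlib Require Import Reals.
From Coquelicot Require Import Coquelicot.
From Stdlib Require Import Lra Psatz ZArith List Lia.
Import ListNotations.
Open Scope R_scope.

Definition Np0 (a b m s c e ei : R) : R := - 8*e*ei*a^2*b^2*m - 4*c*ei*a*b^3 + 4*c*ei*a^3*b + 4*c*e*a*b^3*m^2 + 4*c*e*a*b^5 - 4*c*e*a^3*b*m^2 + 8*c*e*a^3*b^3 + 4*c*e*a^5*b - 8*c^2*a^2*b^2*m + 8*s*ei*a^2*b^2 + 8*s*e*a^2*b^2*m^2 - 8*s^2*a^2*b^2*m.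
Definition Dp0 (a b m s c e ei : R) : R := ei^2*a^2 - 2*e*ei*a^2*m^2 + 2*e*ei*a^2*b^2 + 2*e*ei*a^4 + e^2*a^2*m^4 + 2*e^2*a^2*b^2*m^2 + e^2*a^2*b^4 - 2*e^2*a^4*m^2 + 2*e^2*a^4*b^2 + e^2*a^6 - 4*c*ei*a*b*m + 4*c*e*a*b*m^3 + 4*c*e*a*b^3*m - 4*c*e*a^3*b*m + 4*c^2*b^2*m^2 + 4*c^2*b^4 - 8*s*e*a^2*b^2*m - 8*s*c*a*b^3 + 4*s^2*a^2*b^2.
Definition Np1 (a b m s c e ei : R) : R := 4*c*ei*a*b^4 + 4*c*ei*a^3*b^2 + 4*c*e*a*b^4*m^2 + 4*c*e*a*b^6 + 4*c*e*a^3*b^2*m^2 + 8*c*e*a^3*b^4 + 4*c*e*a^5*b^2 - 4*s*ei*a^2*b^3 - 4*s*ei*a^4*b + 4*s*e*a^2*b^3*m^2 - 4*s*e*a^2*b^5 + 4*s*e*a^4*b*m^2 - 8*s*e*a^4*b^3 - 4*s*e*a^6*b.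
Definition Dp1 (a b m s c e ei : R) : R := - 2*ei^2*a^2*b + 2*e^2*a^2*b*m^4 + 4*e^2*a^2*b^3*m^2 + 2*e^2*a^2*b^5 - 4*e^2*a^4*b*m^2 + 4*e^2*a^4*b^3 + 2*e^2*a^6*b + 4*c*ei*a*b^2*m + 4*c*e*a*b^2*m^3 + 4*c*e*a*b^4*m - 12*c*e*a^3*b^2*m - 8*c^2*a^2*b^3 + 4*s*ei*a^2*b*m - 4*s*e*a^2*b*m^3 - 12*s*e*a^2*b^3*m + 4*s*e*a^4*b*m - 8*s*c*a*b^2*m^2 - 8*s*c*a*b^4 + 8*s*c*a^3*b^2 + 8*s^2*a^2*b^3.
Definition Np2 (a b m s c e ei : R) : R := - 4*c*ei*a*b^5 - 8*c*ei*a^3*b^3 - 4*c*ei*a^5*b + 4*c*e*a*b^5*m^2 + 4*c*e*a*b^7 + 8*c*e*a^3*b^3*m^2 + 4*c*e*a^3*b^5 + 4*c*e*a^5*b*m^2 - 4*c*e*a^5*b^3 - 4*c*e*a^7*b - 8*s*e*a^2*b^6 - 16*s*e*a^4*b^4 - 8*s*e*a^6*b^2.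
Definition Dp2 (a b m s c e ei : R) : R := 4*ei^2*a^2*b^2 + 4*e^2*a^2*b^2*m^4 + 8*e^2*a^2*b^4*m^2 + 4*e^2*a^2*b^6 - 8*e^2*a^4*b^2*m^2 + 8*e^2*a^4*b^4 + 4*e^2*a^6*b^2 - 4*c*ei*a*b^3*m + 4*c*ei*a^3*b*m + 4*c*e*a*b^3*m^3 + 4*c*e*a*b^5*m - 4*c*e*a^3*b*m^3 - 24*c*e*a^3*b^3*m + 4*c*e*a^5*b*m - 8*c^2*a^2*b^2*m^2 - 8*c^2*a^2*b^4 + 8*c^2*a^4*b^2 - 8*s*ei*a^2*b^2*m - 8*s*e*a^2*b^2*m^3 - 16*s*e*a^2*b^4*m + 16*s*e*a^4*b^2*m + 32*s*c*a^3*b^3 + 8*s^2*a^2*b^2*m^2 + 8*s^2*a^2*b^4 - 8*s^2*a^4*b^2.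
Definition Np3 (a b m s c e ei : R) : R := 4*c*ei*a*b^6 + 8*c*ei*a^3*b^4 + 4*c*ei*a^5*b^2 + 4*c*e*a*b^6*m^2 + 4*c*e*a*b^8 + 8*c*e*a^3*b^4*m^2 - 4*c*e*a^3*b^6 + 4*c*e*a^5*b^2*m^2 - 20*c*e*a^5*b^4 - 12*c*e*a^7*b^2 + 4*s*ei*a^2*b^5 + 8*s*ei*a^4*b^3 + 4*s*ei*a^6*b - 4*s*e*a^2*b^5*m^2 - 12*s*e*a^2*b^7 - 8*s*e*a^4*b^3*m^2 - 20*s*e*a^4*b^5 - 4*s*e*a^6*b*m^2 - 4*s*e*a^6*b^3 + 4*s*e*a^8*b.
Definition Dp3 (a b m s c e ei : R) : R := - 8*ei^2*a^2*b^3 + 8*e^2*a^2*b^3*m^4 + 16*e^2*a^2*b^5*m^2 + 8*e^2*a^2*b^7 - 16*e^2*a^4*b^3*m^2 + 16*e^2*a^4*b^5 + 8*e^2*a^6*b^3 + 4*c*ei*a*b^4*m - 12*c*ei*a^3*b^2*m + 4*c*e*a*b^4*m^3 + 4*c*e*a*b^6*m - 12*c*e*a^3*b^2*m^3 - 40*c*e*a^3*b^4*m + 20*c*e*a^5*b^2*m + 32*c^2*a^4*b^3 + 12*s*ei*a^2*b^3*m - 4*s*ei*a^4*b*m - 12*s*e*a^2*b^3*m^3 - 20*s*e*a^2*b^5*m + 4*s*e*a^4*b*m^3 + 40*s*e*a^4*b^3*m - 4*s*e*a^6*b*m + 32*s*c*a^3*b^2*m^2 + 32*s*c*a^3*b^4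 - 32*s*c*a^5*b^2 - 32*s^2*a^4*b^3.
Definition Np4 (a b m s c e ei : R) : R := - 4*c*ei*a*b^7 - 4*c*ei*a^3*b^5 + 4*c*ei*a^5*b^3 + 4*c*ei*a^7*b + 4*c*e*a*b^7*m^2 + 4*c*e*a*b^9 + 4*c*e*a^3*b^5*m^2 - 16*c*e*a^3*b^7 - 4*c*e*a^5*b^3*m^2 - 40*c*e*a^5*b^5 - 4*c*e*a^7*b*m^2 - 16*c*e*a^7*b^3 + 4*c*e*a^9*b - 8*s*ei*a^2*b^6 - 16*s*ei*a^4*b^4 - 8*s*ei*a^6*b^2 - 8*s*e*a^2*b^6*m^2 - 16*s*e*a^2*b^8 - 16*s*e*a^4*b^4*m^2 - 16*s*e*a^4*b^6 - 8*s*e*a^6*b^2*m^2 + 16*s*e*a^6*b^4 + 16*s*e*a^8*b^2.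
Definition Dp4 (a b m s c e ei : R) : R := 16*ei^2*a^2*b^4 + 16*e^2*a^2*b^4*m^4 + 32*e^2*a^2*b^6*m^2 + 16*e^2*a^2*b^8 - 32*e^2*a^4*b^4*m^2 + 32*e^2*a^4*b^6 + 16*e^2*a^6*b^4 - 4*c*ei*a*b^5*m + 24*c*ei*a^3*b^3*m - 4*c*ei*a^5*b*m + 4*c*e*a*b^5*m^3 + 4*c*e*a*b^7*m - 24*c*e*a^3*b^3*m^3 - 60*c*e*a^3*b^5*m + 4*c*e*a^5*b*m^3 + 60*c*e*a^5*b^3*m - 4*c*e*a^7*b*m + 32*c^2*a^4*b^2*m^2 + 32*c^2*a^4*b^4 - 32*c^2*a^6*b^2 - 16*s*ei*a^2*b^4*m + 16*s*ei*a^4*b^2*m - 16*s*e*a^2*b^4*m^3 - 24*s*e*a^2*b^6*m + 16*s*e*a^4*b^2*m^3 + 80*s*e*a^4*b^4*m - 24*s*e*a^6*b^2*m - 128*s*c*a^5*b^3 - 32*s^2*a^4*b^2*m^2 - 32*s^2*a^4*b^4 + 32*s^2*a^6*b^2.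

Definition mono := list nat.
Definition term := (Z * mono)%type.
Definition poly := list term.

Fixpoint mcmp (e1 e2 : mono) : comparison :=
  match e1, e2 with
  | [], [] => Eq
  | [], _ => Lt
  | _, [] => Gt
  | x :: e1', y :: e2' => match Nat.compare x y with Eq => mcmp e1' e2' | r => r end
  end.

Fixpoint vadd (e1 e2 : mono) : mono :=
  match e1, e2 with
  | [], _ => e2
  | _, [] => e1
  | x :: e1', y :: e2' => (x + y)%nat :: vadd e1' e2'
  end.

Fixpoint padd (p q : poly) : poly :=
  match p with
  | [] => q
  | (c1, e1) :: p' =>
    (fix padd_aux (q : poly) : poly :=
       match q with
       | [] => p
       | (c2, e2) :: q' =>
         match mcmp e1 e2 with
         | Lt => (c1, e1) :: padd p' q
         | Gt => (c2, e2) :: padd_aux q'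
         | Eq => let c := (c1 + c2)%Z in
                 if Z.eqb c 0 then padd p' q' else (c, e1) :: padd p' q'
         end
       end) q
  end.

Definition tmul (t : term) (q : poly) : poly :=
  let (c, e) := t in map (fun t2 : term => let (c2, e2) := t2 in ((c * c2)%Z, vadd e e2)) q.

Arguments tmul : simpl never.

Fixpoint pmul0 (p q : poly) : poly :=
  match p with
  | [] => []
  | t :: p' => padd (tmul t q) (pmul0 p' q)
  end.

Fixpoint merge_pairs (l : list poly) : list poly :=
  match l with
  | p1 :: p2 :: r => padd p1 p2 :: merge_pairs r
  | _ => l
  end.

Fixpoint merge_all (fuel : nat) (l : list poly) : poly :=
  match fuel with
  | O => fold_right padd [] l
  | S f => match l with
           | [] => []
           | [p] => p
           | _ => merge_all f (merge_pairs l)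
           end
  end.

Definition pmulb (p q : poly) : poly := merge_all (length p) (map (fun t => tmul t q) p).

Definition pmul (p q : poly) : poly :=
  if Nat.leb (length p) (length q) then pmulb p q else pmulb q p.

Definition pneg (p : poly) : poly := map (fun t : term => let (c, e) := t in ((- c)%Z, e)) p.

Fixpoint ppow (p : poly) (n : nat) : poly :=
  match n with
  | O => [(1%Z, [0;0;0;0;0]%nat)]
  | S O => p
  | S n' => pmul p (ppow p n')
  end.

Fixpoint meval (e : mono) (vs : list R) : R :=
  match e, vs with
  | x :: e', v :: vs' => v ^ x * meval e' vs'
  | _, _ => 1
  end.

Fixpoint peval (p : poly) (vs : list R) : R :=
  match p with
  | [] => 0
  | (c, e) :: p' => IZR c * meval e vs + peval p' vs
  end.

Lemma mcmp_eq e1 e2 : mcmp e1 e2 = Eq -> e1 = e2.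
Proof.
  revert e2; induction e1 as [|x e1 IH]; intros [|y e2]; simpl; try discriminate; auto.
  destruct (Nat.compare x y) eqn:H; try discriminate.
  apply Nat.compare_eq in H. intro H2. subst. f_equal. auto.
Qed.

Lemma meval_vadd e1 e2 vs : meval (vadd e1 e2) vs = meval e1 vs * meval e2 vs.
Proof.
  revert e2 vs; induction e1 as [|x e1 IH]; intros [|y e2] vs; simpl.
  - ring.
  - destruct vs; simpl; ring.
  - destruct vs; simpl; ring.
  - destruct vs as [|v vs]; simpl. ring. rewrite IH, pow_add. ring.
Qed.

Lemma padd_ok p q vs : peval (padd p q) vs = peval p vs + peval q vs.
Proof.
  revert q; induction p as [|[c1 e1] p IH]; intros q; simpl.
  - ring.
  - induction q as [|[c2 e2] q IHq]; simpl.
    + ring.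
    + destruct (mcmp e1 e2) eqn:H.
      * apply mcmp_eq in H; subst e2.
        destruct (Z.eqb (c1 + c2) 0) eqn:Hz.
        -- apply Z.eqb_eq in Hz. rewrite IH.
           assert (IZR c2 = - IZR c1) by (rewrite <- opp_IZR; f_equal; lia).
           rewrite H. ring.
        -- simpl. rewrite IH, plus_IZR. ring.
      * simpl. rewrite IH. simpl. ring.
      * simpl. rewrite IHq. ring.
Qed.

Lemma tmul_ok c e q vs : peval (tmul (c, e) q) vs = IZR c * meval e vs * peval q vs.
Proof.
  unfold tmul.
  induction q as [|[c2 e2] q IH]; simpl. ring.
  rewrite IH, mult_IZR, meval_vadd. ring.
Qed.

Lemma pmul0_ok p q vs : peval (pmul0 p q) vs = peval p vs * peval q vs.
Proof.
  induction p as [|[c e] p IH]; simpl. ring.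
  rewrite padd_ok, tmul_ok, IH. ring.
Qed.

Fixpoint lsum (l : list poly) (vs : list R) : R :=
  match l with [] => 0 | p :: r => peval p vs + lsum r vs end.

Lemma merge_pairs_ok : forall l vs, lsum (merge_pairs l) vs = lsum l vs.
Proof.
  fix IH 1. intros [|p1 [|p2 r]] vs; simpl; try reflexivity.
  rewrite padd_ok, IH. ring.
Qed.

Lemma merge_all_ok f l vs : peval (merge_all f l) vs = lsum l vs.
Proof.
  revert l; induction f as [|f IH]; intros l; simpl.
  - induction l as [|p l IHl]; simpl; auto. rewrite padd_ok, IHl. auto.
  - destruct l as [|p [|p2 r]]; simpl; auto. ring.
    rewrite IH. change (lsum (merge_pairs (p :: p2 :: r)) vs = lsum (p :: p2 :: r) vs).
    apply merge_pairs_ok.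
Qed.

Lemma pmulb_ok p q vs : peval (pmulb p q) vs = peval p vs * peval q vs.
Proof.
  unfold pmulb. rewrite merge_all_ok.
  induction p as [|[c e] p IH]; simpl. ring.
  rewrite tmul_ok, IH. ring.
Qed.

Lemma pmul_ok p q vs : peval (pmul p q) vs = peval p vs * peval q vs.
Proof.
  unfold pmul. destruct (Nat.leb (length p) (length q)); rewrite pmulb_ok; ring.
Qed.

Lemma pneg_ok p vs : peval (pneg p) vs = - peval p vs.
Proof.
  induction p as [|[c e] p IH]; simpl. ring.
  rewrite IH, opp_IZR. ring.
Qed.

Lemma meval_zero vs : meval [0;0;0;0;0]%nat vs = 1.
Proof. destruct vs as [|? [|? [|? [|? [|? ?]]]]]; simpl; ring. Qed.

Lemma ppow_ok p n vs : peval (ppow p n) vs = peval p vs ^ n.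
Proof.
  induction n as [|n IH].
  - cbn [ppow peval]. rewrite meval_zero. simpl. ring.
  - destruct n as [|n]. simpl. ring.
    change (ppow p (S (S n))) with (pmul p (ppow p (S n))).
    rewrite pmul_ok, IH. simpl. ring.
Qed.

Inductive ex :=
| EVar (n : nat) | EConst (z : Z) | EAdd (x y : ex) | ESub (x y : ex) | EMul (x y : ex) | EPow (x : ex) (n : nat)
| ELet (x y : ex).

Fixpoint denote (env : list R) (x : ex) : R :=
  match x with
  | EVar n => nth n env 0
  | EConst z => IZR z
  | EAdd x y => denote env x + denote env y
  | ESub x y => denote env x - denote env y
  | EMul x y => denote env x * denote env y
  | EPow x n => denote env x ^ n
  | ELet x y => denote (denote env x :: env) y
  end.

Fixpoint comp (penv : list poly) (x : ex) : poly :=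
  match x with
  | EVar n => nth n penv []
  | EConst z => if Z.eqb z 0 then [] else [(z, [0;0;0;0;0]%nat)]
  | EAdd x y => padd (comp penv x) (comp penv y)
  | ESub x y => padd (comp penv x) (pneg (comp penv y))
  | EMul x y => pmul (comp penv x) (comp penv y)
  | EPow x n => ppow (comp penv x) n
  | ELet x y => comp (comp penv x :: penv) y
  end.

Lemma comp_ok penv env vs x :
  (forall n, peval (nth n penv []) vs = nth n env 0) ->
  peval (comp penv x) vs = denote env x.
Proof.
  revert penv env. induction x; intros penv env Henv; simpl.
  - apply Henv.
  - destruct (Z.eqb z 0) eqn:H. apply Z.eqb_eq in H; subst; simpl; ring.
    cbn [peval]. rewrite meval_zero. ring.
  - rewrite padd_ok, (IHx1 penv env), (IHx2 penv env); auto.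
  - rewrite padd_ok, pneg_ok, (IHx1 penv env), (IHx2 penv env); auto.
  - rewrite pmul_ok, (IHx1 penv env), (IHx2 penv env); auto.
  - rewrite ppow_ok, (IHx penv env); auto.
  - apply IHx2. intros [|n]; simpl; auto.
Qed.

Lemma Henv_ok (penv : list poly) (env : list R) vs :
  length penv = length env ->
  Forall2 (fun p r => peval p vs = r) penv env ->
  forall n, peval (nth n penv []) vs = nth n env 0.
Proof.
  intros _ H. induction H; intros [|n]; simpl; auto.
Qed.

Declare Scope ex_scope.
Delimit Scope ex_scope with ex.
Bind Scope ex_scope with ex.
Notation "x + y" := (EAdd x y) : ex_scope.
Notation "x - y" := (ESub x y) : ex_scope.
Notation "x * y" := (EMul x y) : ex_scope.
Notation "x ^ n" := (EPow x n) : ex_scope.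
Arguments EPow x%_ex_scope n%_nat_scope.
Definition nd0 : poly := [((-4)%Z, [1;3;0;0;3]%nat); ((-4)%Z, [1;3;0;2;1]%nat); ((4)%Z, [1;3;2;0;1]%nat); ((4)%Z, [1;5;0;0;1]%nat); ((8)%Z, [2;2;0;1;2]%nat); ((8)%Z, [2;2;0;3;0]%nat); ((-16)%Z, [2;2;1;0;2]%nat); ((-16)%Z, [2;2;1;2;0]%nat); ((8)%Z, [2;2;2;1;0]%nat); ((4)%Z, [3;1;0;0;3]%nat); ((4)%Z, [3;1;0;2;1]%nat); ((-4)%Z, [3;1;2;0;1]%nat); ((8)%Z, [3;3;0;0;1]%nat); ((4)%Z, [5;1;0;0;1]%nat)].
Definition dd0 : poly := [((4)%Z, [0;2;2;0;2]%nat); ((4)%Z, [0;4;0;0;2]%nat); ((-4)%Z, [1;1;1;0;3]%nat); ((-4)%Z, [1;1;1;2;1]%nat); ((4)%Z, [1;1;3;0;1]%nat); ((-8)%Z, [1;3;0;1;1]%nat); ((4)%Z, [1;3;1;0;1]%nat); ((1)%Z, [2;0;0;0;4]%nat); ((2)%Z, [2;0;0;2;2]%nat); ((1)%Z, [2;0;0;4;0]%nat); ((-2)%Z, [2;0;2;0;2]%nat); ((-2)%Z, [2;0;2;2;0]%nat); ((1)%Z, [2;0;4;0;0]%nat); ((2)%Z, [2;2;0;0;2]%nat); ((6)%Z, [2;2;0;2;0]%nat); ((-8)%Z, [2;2;1;1;0]%nat); ((2)%Z, [2;2;2;0;0]%nat); ((1)%Z, [2;4;0;0;0]%nat); ((-4)%Z,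 [3;1;1;0;1]%nat); ((2)%Z, [4;0;0;0;2]%nat); ((2)%Z, [4;0;0;2;0]%nat); ((-2)%Z, [4;0;2;0;0]%nat); ((2)%Z, [4;2;0;0;0]%nat); ((1)%Z, [6;0;0;0;0]%nat)].
Definition nd1 : poly := [((4)%Z, [1;4;0;0;3]%nat); ((4)%Z, [1;4;0;2;1]%nat); ((4)%Z, [1;4;2;0;1]%nat); ((4)%Z, [1;6;0;0;1]%nat); ((-4)%Z, [2;3;0;1;2]%nat); ((-4)%Z, [2;3;0;3;0]%nat); ((4)%Z, [2;3;2;1;0]%nat); ((-4)%Z, [2;5;0;1;0]%nat); ((4)%Z, [3;2;0;0;3]%nat); ((4)%Z, [3;2;0;2;1]%nat); ((4)%Z, [3;2;2;0;1]%nat); ((8)%Z, [3;4;0;0;1]%nat); ((-4)%Z, [4;1;0;1;2]%nat); ((-4)%Z, [4;1;0;3;0]%nat); ((4)%Z, [4;1;2;1;0]%nat); ((-8)%Z, [4;3;0;1;0]%nat); ((4)%Z, [5;2;0;0;1]%nat); ((-4)%Z, [6;1;0;1;0]%nat)].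
Definition dd1 : poly := [((4)%Z, [1;2;1;0;3]%nat); ((4)%Z, [1;2;1;2;1]%nat); ((-8)%Z, [1;2;2;1;1]%nat); ((4)%Z, [1;2;3;0;1]%nat); ((-8)%Z, [1;4;0;1;1]%nat); ((4)%Z, [1;4;1;0;1]%nat); ((-2)%Z, [2;1;0;0;4]%nat); ((-4)%Z, [2;1;0;2;2]%nat); ((-2)%Z, [2;1;0;4;0]%nat); ((4)%Z, [2;1;1;1;2]%nat); ((4)%Z, [2;1;1;3;0]%nat); ((-4)%Z, [2;1;3;1;0]%nat); ((2)%Z, [2;1;4;0;0]%nat); ((-8)%Z, [2;3;0;0;2]%nat); ((8)%Z, [2;3;0;2;0]%nat); ((-12)%Z, [2;3;1;1;0]%nat); ((4)%Z, [2;3;2;0;0]%nat); ((2)%Z, [2;5;0;0;0]%nat); ((8)%Z, [3;2;0;1;1]%nat); ((-12)%Z, [3;2;1;0;1]%nat); ((4)%Z, [4;1;1;1;0]%nat); ((-4)%Z, [4;1;2;0;0]%nat); ((4)%Z, [4;3;0;0;0]%nat); ((2)%Z, [6;1;0;0;0]%nat)].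
Definition nd2 : poly := [((-4)%Z, [1;5;0;0;3]%nat); ((-4)%Z, [1;5;0;2;1]%nat); ((4)%Z, [1;5;2;0;1]%nat); ((4)%Z, [1;7;0;0;1]%nat); ((-8)%Z, [2;6;0;1;0]%nat); ((-8)%Z, [3;3;0;0;3]%nat); ((-8)%Z, [3;3;0;2;1]%nat); ((8)%Z, [3;3;2;0;1]%nat); ((4)%Z, [3;5;0;0;1]%nat); ((-16)%Z, [4;4;0;1;0]%nat); ((-4)%Z, [5;1;0;0;3]%nat); ((-4)%Z, [5;1;0;2;1]%nat); ((4)%Z, [5;1;2;0;1]%nat); ((-4)%Z, [5;3;0;0;1]%nat); ((-8)%Z, [6;2;0;1;0]%nat); ((-4)%Z, [7;1;0;0;1]%nat)].
Definition dd2 : poly := [((-4)%Z, [1;3;1;0;3]%nat); ((-4)%Z, [1;3;1;2;1]%nat); ((4)%Z, [1;3;3;0;1]%nat); ((4)%Z, [1;5;1;0;1]%nat); ((4)%Z, [2;2;0;0;4]%nat); ((8)%Z, [2;2;0;2;2]%nat); ((4)%Z, [2;2;0;4;0]%nat); ((-8)%Z, [2;2;1;1;2]%nat); ((-8)%Z, [2;2;1;3;0]%nat); ((-8)%Z, [2;2;2;0;2]%nat); ((8)%Z, [2;2;2;2;0]%nat); ((-8)%Z, [2;2;3;1;0]%nat); ((4)%Z, [2;2;4;0;0]%nat); ((-8)%Z, [2;4;0;0;2]%nat); ((8)%Z, [2;4;0;2;0]%nat); ((-16)%Z, [2;4;1;1;0]%nat); ((8)%Z, [2;4;2;0;0]%nat);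 ((4)%Z, [2;6;0;0;0]%nat); ((4)%Z, [3;1;1;0;3]%nat); ((4)%Z, [3;1;1;2;1]%nat); ((-4)%Z, [3;1;3;0;1]%nat); ((32)%Z, [3;3;0;1;1]%nat); ((-24)%Z, [3;3;1;0;1]%nat); ((8)%Z, [4;2;0;0;2]%nat); ((-8)%Z, [4;2;0;2;0]%nat); ((16)%Z, [4;2;1;1;0]%nat); ((-8)%Z, [4;2;2;0;0]%nat); ((8)%Z, [4;4;0;0;0]%nat); ((4)%Z, [5;1;1;0;1]%nat); ((4)%Z, [6;2;0;0;0]%nat)].
Definition nd3 : poly := [((4)%Z, [1;6;0;0;3]%nat); ((4)%Z, [1;6;0;2;1]%nat); ((4)%Z, [1;6;2;0;1]%nat); ((4)%Z, [1;8;0;0;1]%nat); ((4)%Z, [2;5;0;1;2]%nat); ((4)%Z, [2;5;0;3;0]%nat); ((-4)%Z, [2;5;2;1;0]%nat); ((-12)%Z, [2;7;0;1;0]%nat); ((8)%Z, [3;4;0;0;3]%nat); ((8)%Z, [3;4;0;2;1]%nat); ((8)%Z, [3;4;2;0;1]%nat); ((-4)%Z, [3;6;0;0;1]%nat); ((8)%Z, [4;3;0;1;2]%nat); ((8)%Z, [4;3;0;3;0]%nat); ((-8)%Z, [4;3;2;1;0]%nat); ((-20)%Z, [4;5;0;1;0]%nat); ((4)%Z, [5;2;0;0;3]%nat); ((4)%Z, [5;2;0;2;1]%nat); ((4)%Z, [5;2;2;0;1]%nat); ((-20)%Z, [5;4;0;0;1]%nat); ((4)%Z, [6;1;0;1;2]%nat);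 ((4)%Z, [6;1;0;3;0]%nat); ((-4)%Z, [6;1;2;1;0]%nat); ((-4)%Z, [6;3;0;1;0]%nat); ((-12)%Z, [7;2;0;0;1]%nat); ((4)%Z, [8;1;0;1;0]%nat)].
Definition dd3 : poly := [((4)%Z, [1;4;1;0;3]%nat); ((4)%Z, [1;4;1;2;1]%nat); ((4)%Z, [1;4;3;0;1]%nat); ((4)%Z, [1;6;1;0;1]%nat); ((-8)%Z, [2;3;0;0;4]%nat); ((-16)%Z, [2;3;0;2;2]%nat); ((-8)%Z, [2;3;0;4;0]%nat); ((12)%Z, [2;3;1;1;2]%nat); ((12)%Z, [2;3;1;3;0]%nat); ((-12)%Z, [2;3;3;1;0]%nat); ((8)%Z, [2;3;4;0;0]%nat); ((-20)%Z, [2;5;1;1;0]%nat); ((16)%Z, [2;5;2;0;0]%nat); ((8)%Z, [2;7;0;0;0]%nat); ((-12)%Z, [3;2;1;0;3]%nat); ((-12)%Z, [3;2;1;2;1]%nat); ((32)%Z, [3;2;2;1;1]%nat); ((-12)%Z, [3;2;3;0;1]%nat); ((32)%Z, [3;4;0;1;1]%nat); ((-40)%Z, [3;4;1;0;1]%nat); ((-4)%Z, [4;1;1;1;2]%nat); ((-4)%Z, [4;1;1;3;0]%nat); ((4)%Z, [4;1;3;1;0]%nat); ((32)%Z, [4;3;0;0;2]%nat); ((-32)%Z, [4;3;0;2;0]%nat); ((40)%Z, [4;3;1;1;0]%nat); ((-16)%Z, [4;3;2;0;0]%nat); ((16)%Z, [4;5;0;0;0]%nat); ((-32)%Z, [5;2;0;1;1]%nat);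 ((20)%Z, [5;2;1;0;1]%nat); ((-4)%Z, [6;1;1;1;0]%nat); ((8)%Z, [6;3;0;0;0]%nat)].
Definition nd4 : poly := [((-4)%Z, [1;7;0;0;3]%nat); ((-4)%Z, [1;7;0;2;1]%nat); ((4)%Z, [1;7;2;0;1]%nat); ((4)%Z, [1;9;0;0;1]%nat); ((-8)%Z, [2;6;0;1;2]%nat); ((-8)%Z, [2;6;0;3;0]%nat); ((-8)%Z, [2;6;2;1;0]%nat); ((-16)%Z, [2;8;0;1;0]%nat); ((-4)%Z, [3;5;0;0;3]%nat); ((-4)%Z, [3;5;0;2;1]%nat); ((4)%Z, [3;5;2;0;1]%nat); ((-16)%Z, [3;7;0;0;1]%nat); ((-16)%Z, [4;4;0;1;2]%nat); ((-16)%Z, [4;4;0;3;0]%nat); ((-16)%Z, [4;4;2;1;0]%nat); ((-16)%Z, [4;6;0;1;0]%nat); ((4)%Z, [5;3;0;0;3]%nat); ((4)%Z, [5;3;0;2;1]%nat); ((-4)%Z, [5;3;2;0;1]%nat); ((-40)%Z, [5;5;0;0;1]%nat); ((-8)%Z, [6;2;0;1;2]%nat); ((-8)%Z, [6;2;0;3;0]%nat); ((-8)%Z, [6;2;2;1;0]%nat); ((16)%Z, [6;4;0;1;0]%nat); ((4)%Z, [7;1;0;0;3]%nat); ((4)%Z, [7;1;0;2;1]%nat); ((-4)%Z, [7;1;2;0;1]%nat); ((-16)%Z, [7;3;0;0;1]%nat); ((16)%Z, [8;2;0;1;0]%nat); ((4)%Z, [9;1;0;0;1]%nat)].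
Definition dd4 : poly := [((-4)%Z, [1;5;1;0;3]%nat); ((-4)%Z, [1;5;1;2;1]%nat); ((4)%Z, [1;5;3;0;1]%nat); ((4)%Z, [1;7;1;0;1]%nat); ((16)%Z, [2;4;0;0;4]%nat); ((32)%Z, [2;4;0;2;2]%nat); ((16)%Z, [2;4;0;4;0]%nat); ((-16)%Z, [2;4;1;1;2]%nat); ((-16)%Z, [2;4;1;3;0]%nat); ((-16)%Z, [2;4;3;1;0]%nat); ((16)%Z, [2;4;4;0;0]%nat); ((-24)%Z, [2;6;1;1;0]%nat); ((32)%Z, [2;6;2;0;0]%nat); ((16)%Z, [2;8;0;0;0]%nat); ((24)%Z, [3;3;1;0;3]%nat); ((24)%Z, [3;3;1;2;1]%nat); ((-24)%Z, [3;3;3;0;1]%nat); ((-60)%Z, [3;5;1;0;1]%nat); ((16)%Z, [4;2;1;1;2]%nat); ((16)%Z, [4;2;1;3;0]%nat); ((32)%Z, [4;2;2;0;2]%nat); ((-32)%Z, [4;2;2;2;0]%nat); ((16)%Z, [4;2;3;1;0]%nat); ((32)%Z, [4;4;0;0;2]%nat); ((-32)%Z, [4;4;0;2;0]%nat); ((80)%Z, [4;4;1;1;0]%nat); ((-32)%Z, [4;4;2;0;0]%nat); ((32)%Z, [4;6;0;0;0]%nat); ((-4)%Z, [5;1;1;0;3]%nat); ((-4)%Z, [5;1;1;2;1]%nat); ((4)%Z, [5;1;3;0;1]%nat); ((-128)%Z, [5;3;0;1;1]%nat); ((60)%Z, [5;3;1;0;1]%nat); ((-32)%Z, [6;2;0;0;2]%nat);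 ((32)%Z, [6;2;0;2;0]%nat); ((-24)%Z, [6;2;1;1;0]%nat); ((16)%Z, [6;4;0;0;0]%nat); ((-4)%Z, [7;1;1;0;1]%nat)].
Definition EPh : ex := (ELet (( (EVar 1) * (EVar 5) - (EVar 0) * (EVar 6) )) (ELet (( (EVar 6) * ( (EVar 3) * (EVar 6) - (EVar 1) * (EVar 8) - (EConst 2) * (EVar 2) * (EVar 7) ) + (EConst 2) * (EVar 1) * (EVar 7) ^ 2 )) (ELet (( (EVar 7) * ( (EVar 7) * ( (EVar 7) * ( (EVar 7) * (EVar 6) - (EConst 4) * (EVar 5) * (EVar 8) - (EConst 6) * (EVar 4) * (EVar 9) - (EConst 4) * (EVar 3) * (EVar 10) - (EVar 2) * (EVar 11) ) + (EConst 12) * (EVar 4) * (EVar 8) ^ 2 + (EConst 24) * (EVar 3) * (EVar 8) * (EVar 9) + (EConst 6) * (EVar 2) * (EVar 9) ^ 2 + (EConst 8) * (EVar 2) * (EVar 8) * (EVar 10) ) - (EConst 24) * (EVar 3) * (EVar 8) ^ 3 - (EConst 36) * (EVar 2) * (EVar 8) ^ 2 * (EVar 9) ) + (EConst 24) * (EVar 2) * (EVar 8) ^ 4 )) (( (EVar 0) + (EConst 10) * (EVar 3) * (EVar 2) ^ 2 + (EConst 10) * (EVar 3) ^ 2 * (EVar 1) + (EConst 6) * (EVar 3) ^ 5 + (EVar 8) * ( (EConst 5) * (EVar 15) * (EVar 2) ^ 2 + (EConst 10) * (EVar 15) * (EVar 3) * (EVar 1) + (EConst 15) * (EVar 15) *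 (EVar 3) ^ 4 + (EVar 8) * ( ( (EConst 0) - (EConst 2) ) * ( (EVar 14) ^ 2 - (EVar 13) ^ 2 ) * (EVar 1) + ( (EConst 10) * (EVar 15) ^ 2 - (EConst 4) * ( (EVar 14) ^ 2 - (EVar 13) ^ 2 ) ) * (EVar 3) ^ 3 + (EVar 8) * ( ( (EConst 0) - (EConst 6) ) * ( (EVar 14) ^ 2 - (EVar 13) ^ 2 ) * (EVar 15) * (EVar 3) ^ 2 + (EVar 8) * ( (EVar 13) ^ 2 + (EVar 14) ^ 2 ) ^ 2 * (EVar 3) ) ) ) )))))%ex.

Lemma EPh_comp : comp [nd0; nd1; nd2; nd3; nd4; dd0; dd1; dd2; dd3; dd4; [(1%Z, [1;0;0;0;0]%nat)]; [(1%Z, [0;1;0;0;0]%nat)]; [(1%Z, [0;0;1;0;0]%nat)]] EPh = [].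
Proof. vm_compute. reflexivity. Qed.

Lemma poly_reflect (a b m s c : R) :
  denote [Np0 a b m s c 1 (s^2+c^2); Np1 a b m s c 1 (s^2+c^2); Np2 a b m s c 1 (s^2+c^2);
          Np3 a b m s c 1 (s^2+c^2); Np4 a b m s c 1 (s^2+c^2);
          Dp0 a b m s c 1 (s^2+c^2); Dp1 a b m s c 1 (s^2+c^2); Dp2 a b m s c 1 (s^2+c^2);
          Dp3 a b m s c 1 (s^2+c^2); Dp4 a b m s c 1 (s^2+c^2); a; b; m] EPh = 0.
Proof.
  assert (Henv : forall n, peval (nth n [nd0; nd1; nd2; nd3; nd4; dd0; dd1; dd2; dd3; dd4; [(1%Z, [1;0;0;0;0]%nat)]; [(1%Z, [0;1;0;0;0]%nat)]; [(1%Z, [0;0;1;0;0]%nat)]] []) [a; b; m; s; c]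
     = nth n [Np0 a b m s c 1 (s^2+c^2); Np1 a b m s c 1 (s^2+c^2); Np2 a b m s c 1 (s^2+c^2);
          Np3 a b m s c 1 (s^2+c^2); Np4 a b m s c 1 (s^2+c^2);
          Dp0 a b m s c 1 (s^2+c^2); Dp1 a b m s c 1 (s^2+c^2); Dp2 a b m s c 1 (s^2+c^2);
          Dp3 a b m s c 1 (s^2+c^2); Dp4 a b m s c 1 (s^2+c^2); a; b; m] 0).
  { apply Henv_ok; [reflexivity|].
    repeat constructor;
    unfold Np0, Np1, Np2, Np3, Np4, Dp0, Dp1, Dp2, Dp3, Dp4, nd0, nd1, nd2, nd3, nd4, dd0, dd1, dd2, dd3, dd4;
    cbn [peval meval]; ring. }
  pose proof (comp_ok _ _ _ EPh Henv) as H.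
  rewrite EPh_comp in H. cbn [peval] in H. rewrite <- H. reflexivity.
Qed.

Lemma poly_horner (N0 N1 N2 N3 N4 D0 D1 D2 D3 D4 a b m : R) :
  let p1 := N1*D0 - N0*D1 in
  let p2 := N2*D0^2 - N0*D0*D2 - 2*N1*D0*D1 + 2*N0*D1^2 in
  let p4 := N4*D0^4 - 6*N2*D0^3*D2 + 24*N1*D0^2*D1*D2 - 4*N1*D0^3*D3 - 36*N0*D0*D1^2*D2 + 6*N0*D0^2*D2^2 + 8*N0*D0^2*D1*D3 - N0*D0^3*D4 - 4*N3*D0^3*D1 + 12*N2*D0^2*D1^2 - 24*N1*D0*D1^3 + 24*N0*D1^4 in
  p4 - 2*(b^2-a^2)*(p2*D0^2 + 3*m*N0^2*D0^3 + 2*N0^3*D0^2) + (a^2+b^2)^2*N0*D0^4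
  + 10*N0*p1^2 + 10*N0^2*p2 + 6*N0^5 + 5*m*p1^2*D0 + 10*m*N0*p2*D0
  + 10*m^2*N0^3*D0^2 + 15*m*N0^4*D0 = denote [N0; N1; N2; N3; N4; D0; D1; D2; D3; D4; a; b; m] EPh.
Proof. cbv zeta. cbn [denote nth EPh]. ring. Qed.

Lemma poly_hom (N0 N1 N2 N3 N4 D0 D1 D2 D3 D4 a b m k : R) :
  denote [k*N0; k*N1; k*N2; k*N3; k*N4; k*D0; k*D1; k*D2; k*D3; k*D4; a; b; m] EPh
  = k^5 * denote [N0; N1; N2; N3; N4; D0; D1; D2; D3; D4; a; b; m] EPh.
Proof. cbn [denote nth EPh]. ring. Qed.

Lemma DnS (f : R -> R) n x : Derive_n f (S n) x = Derive (Derive_n f n) x.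
Proof. reflexivity. Qed.

Lemma quot_derivs (K : R) (N0 N1 N2 N3 N4 D0 D1 D2 D3 D4 : R -> R) :
  (forall x, is_derive N0 x (N1 x)) -> (forall x, is_derive N1 x (N2 x)) ->
  (forall x, is_derive N2 x (N3 x)) -> (forall x, is_derive N3 x (N4 x)) ->
  (forall x, is_derive D0 x (D1 x)) -> (forall x, is_derive D1 x (D2 x)) ->
  (forall x, is_derive D2 x (D3 x)) -> (forall x, is_derive D3 x (D4 x)) ->
  (forall x, D0 x <> 0) ->
  forall x,
  Derive_n (fun y => K * (N0 y / D0 y)) 1 x = K * (N1 x * D0 x - N0 x * D1 x) / D0 x ^ 2 /\
  Derive_n (fun y => K * (N0 y / D0 y)) 2 x = K * (N2 x * D0 x ^ 2 - N0 x * D0 x * D2 x - 2 * N1 x * D0 x * D1 x + 2 * N0 x * D1 x ^ 2) / D0 x ^ 3 /\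
  Derive_n (fun y => K * (N0 y / D0 y)) 4 x = K * (N4 x*D0 x^4 - 6*N2 x*D0 x^3*D2 x + 24*N1 x*D0 x^2*D1 x*D2 x - 4*N1 x*D0 x^3*D3 x - 36*N0 x*D0 x*D1 x^2*D2 x + 6*N0 x*D0 x^2*D2 x^2 + 8*N0 x*D0 x^2*D1 x*D3 x - N0 x*D0 x^3*D4 x - 4*N3 x*D0 x^3*D1 x + 12*N2 x*D0 x^2*D1 x^2 - 24*N1 x*D0 x*D1 x^3 + 24*N0 x*D1 x^4) / D0 x ^ 5.
Proof.
  intros hN0 hN1 hN2 hN3 hD0 hD1 hD2 hD3 hnz.
  pose (g := fun y => K * (N0 y / D0 y)).
  assert (dN0 : forall x, Derive (fun y => N0 y) x = N1 x) by (intro; apply is_derive_unique; apply hN0).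
  assert (dN1 : forall x, Derive (fun y => N1 y) x = N2 x) by (intro; apply is_derive_unique; apply hN1).
  assert (dN2 : forall x, Derive (fun y => N2 y) x = N3 x) by (intro; apply is_derive_unique; apply hN2).
  assert (dN3 : forall x, Derive (fun y => N3 y) x = N4 x) by (intro; apply is_derive_unique; apply hN3).
  assert (dD0 : forall x, Derive (fun y => D0 y) x = D1 x) by (intro; apply is_derive_unique; apply hD0).
  assert (dD1 : forall x, Derive (fun y => D1 y) x = D2 x) by (intro; apply is_derive_unique; apply hD1).
  assert (dD2 : forall x, Derive (fun y => D2 y) x = D3 x) by (intro; apply is_derive_unique; apply hD2).
  assert (dD3 : forall x, Derive (fun y => D3 y) x = D4 x) by (intro; apply is_derive_unique; apply hD3).
  assert (eN0 : forall x, ex_derive (fun y => N0 y) x) by (intro x; eexists; apply hN0).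
  assert (eN1 : forall x, ex_derive (fun y => N1 y) x) by (intro x; eexists; apply hN1).
  assert (eN2 : forall x, ex_derive (fun y => N2 y) x) by (intro x; eexists; apply hN2).
  assert (eN3 : forall x, ex_derive (fun y => N3 y) x) by (intro x; eexists; apply hN3).
  assert (eD0 : forall x, ex_derive (fun y => D0 y) x) by (intro x; eexists; apply hD0).
  assert (eD1 : forall x, ex_derive (fun y => D1 y) x) by (intro x; eexists; apply hD1).
  assert (eD2 : forall x, ex_derive (fun y => D2 y) x) by (intro x; eexists; apply hD2).
  assert (eD3 : forall x, ex_derive (fun y => D3 y) x) by (intro x; eexists; apply hD3).
  Ltac stp eN0 eN1 eN2 eN3 eD0 eD1 eD2 eD3 dN0 dN1 dN2 dN3 dD0 dD1 dD2 dD3 hnz :=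
    apply is_derive_unique; auto_derive;
    [ repeat split; auto; repeat apply Rmult_integral_contrapositive_currified; auto; apply R1_neq_R0
    | rewrite ?dN0, ?dN1, ?dN2, ?dN3, ?dD0, ?dD1, ?dD2, ?dD3; field; auto ].
  assert (H1 : forall x, Derive_n (fun y => K * (N0 y / D0 y)) 1 x = K * (N1 x * D0 x - N0 x * D1 x) / D0 x ^ 2).
  { intro x; simpl. stp eN0 eN1 eN2 eN3 eD0 eD1 eD2 eD3 dN0 dN1 dN2 dN3 dD0 dD1 dD2 dD3 hnz. }
  assert (H2 : forall x, Derive_n (fun y => K * (N0 y / D0 y)) 2 x = K * (N2 x * D0 x ^ 2 - N0 x * D0 x * D2 x - 2 * N1 x * D0 x * D1 x + 2 * N0 x * D1 x ^ 2) / D0 x ^ 3).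
  { intro x; rewrite DnS.
    rewrite (Derive_ext _ _ x H1).
    stp eN0 eN1 eN2 eN3 eD0 eD1 eD2 eD3 dN0 dN1 dN2 dN3 dD0 dD1 dD2 dD3 hnz. }
  assert (H3 : forall x, Derive_n (fun y => K * (N0 y / D0 y)) 3 x = K * (N3 x*D0 x^3 - 3*N1 x*D0 x^2*D2 x + 6*N0 x*D0 x*D1 x*D2 x - N0 x*D0 x^2*D3 x - 3*N2 x*D0 x^2*D1 x + 6*N1 x*D0 x*D1 x^2 - 6*N0 x*D1 x^3) / D0 x ^ 4).
  { intro x; rewrite DnS.
    rewrite (Derive_ext _ _ x H2).
    stp eN0 eN1 eN2 eN3 eD0 eD1 eD2 eD3 dN0 dN1 dN2 dN3 dD0 dD1 dD2 dD3 hnz. }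
  intro x; split; [apply H1|split; [apply H2|]].
  rewrite DnS.
  rewrite (Derive_ext _ _ x H3).
  stp eN0 eN1 eN2 eN3 eD0 eD1 eD2 eD3 dN0 dN1 dN2 dN3 dD0 dD1 dD2 dD3 hnz.
Qed.


Lemma final (a b m s c e : R) : e <> 0 ->
  let ei := (s^2+c^2)/e in
  let N0 := Np0 a b m s c e ei in let N1 := Np1 a b m s c e ei in
  let N2 := Np2 a b m s c e ei in let N3 := Np3 a b m s c e ei in
  let N4 := Np4 a b m s c e ei in
  let D0 := Dp0 a b m s c e ei in let D1 := Dp1 a b m s c e ei in
  let D2 := Dp2 a b m s c e ei in let D3 := Dp3 a b m s c e ei in
  let D4 := Dp4 a b m s c e ei in
  let p1 := N1*D0 - N0*D1 in
  let p2 := N2*D0^2 - N0*D0*D2 - 2*N1*D0*D1 + 2*N0*D1^2 in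
  let p4 := N4*D0^4 - 6*N2*D0^3*D2 + 24*N1*D0^2*D1*D2 - 4*N1*D0^3*D3 - 36*N0*D0*D1^2*D2 + 6*N0*D0^2*D2^2 + 8*N0*D0^2*D1*D3 - N0*D0^3*D4 - 4*N3*D0^3*D1 + 12*N2*D0^2*D1^2 - 24*N1*D0*D1^3 + 24*N0*D1^4 in
  p4 - 2*(b^2-a^2)*(p2*D0^2 + 3*m*N0^2*D0^3 + 2*N0^3*D0^2) + (a^2+b^2)^2*N0*D0^4
  + 10*N0*p1^2 + 10*N0^2*p2 + 6*N0^5 + 5*m*p1^2*D0 + 10*m*N0*p2*D0
  + 10*m^2*N0^3*D0^2 + 15*m*N0^4*D0 = 0.
Proof.
  intros He. cbv zeta.
  pose proof (poly_horner (Np0 a b m s c e ((s^2+c^2)/e)) (Np1 a b m s c e ((s^2+c^2)/e))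
    (Np2 a b m s c e ((s^2+c^2)/e)) (Np3 a b m s c e ((s^2+c^2)/e)) (Np4 a b m s c e ((s^2+c^2)/e))
    (Dp0 a b m s c e ((s^2+c^2)/e)) (Dp1 a b m s c e ((s^2+c^2)/e))
    (Dp2 a b m s c e ((s^2+c^2)/e)) (Dp3 a b m s c e ((s^2+c^2)/e)) (Dp4 a b m s c e ((s^2+c^2)/e)) a b m) as PH.
  cbv zeta in PH. rewrite PH. clear PH.
  replace (Np0 a b m s c e ((s^2+c^2)/e)) with (e^2 * Np0 a b m (s/e) (c/e) 1 ((s/e)^2+(c/e)^2))
    by (unfold Np0; field; exact He).
  replace (Np1 a b m s c e ((s^2+c^2)/e)) with (e^2 * Np1 a b m (s/e) (c/e) 1 ((s/e)^2+(c/e)^2))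
    by (unfold Np1; field; exact He).
  replace (Np2 a b m s c e ((s^2+c^2)/e)) with (e^2 * Np2 a b m (s/e) (c/e) 1 ((s/e)^2+(c/e)^2))
    by (unfold Np2; field; exact He).
  replace (Np3 a b m s c e ((s^2+c^2)/e)) with (e^2 * Np3 a b m (s/e) (c/e) 1 ((s/e)^2+(c/e)^2))
    by (unfold Np3; field; exact He).
  replace (Np4 a b m s c e ((s^2+c^2)/e)) with (e^2 * Np4 a b m (s/e) (c/e) 1 ((s/e)^2+(c/e)^2))
    by (unfold Np4; field; exact He).
  replace (Dp0 a b m s c e ((s^2+c^2)/e)) with (e^2 * Dp0 a b m (s/e) (c/e) 1 ((s/e)^2+(c/e)^2))
    by (unfold Dp0; field; exact He).
  replace (Dp1 a b m s c e ((s^2+c^2)/e)) with (e^2 * Dp1 a b m (s/e) (c/e) 1 ((s/e)^2+(c/e)^2))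
    by (unfold Dp1; field; exact He).
  replace (Dp2 a b m s c e ((s^2+c^2)/e)) with (e^2 * Dp2 a b m (s/e) (c/e) 1 ((s/e)^2+(c/e)^2))
    by (unfold Dp2; field; exact He).
  replace (Dp3 a b m s c e ((s^2+c^2)/e)) with (e^2 * Dp3 a b m (s/e) (c/e) 1 ((s/e)^2+(c/e)^2))
    by (unfold Dp3; field; exact He).
  replace (Dp4 a b m s c e ((s^2+c^2)/e)) with (e^2 * Dp4 a b m (s/e) (c/e) 1 ((s/e)^2+(c/e)^2))
    by (unfold Dp4; field; exact He).
  rewrite poly_hom, poly_reflect. ring.
Qed.

Definition F0p (a b m s c e ei : R) : R := a*ei + a*(a^2+b^2-m^2)*e - 2*m*b*c.
Definition G0p (a b m s c e ei : R) : R := -2*a*m*b*e - 2*b^2*c + 2*a*b*s.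
Definition F1p (a b m s c e ei : R) : R := - ei*a*b - e*a*b*m^2 + e*a*b^3 + e*a^3*b + 2*s*a*b*m.
Definition G1p (a b m s c e ei : R) : R := - 2*e*a*b^2*m + 2*c*a^2*b + 2*s*a*b^2.

Lemma NpD_eq (a b m s c e ei : R) :
  Np0 a b m s c e ei = 2 * (F0p a b m s c e ei * G1p a b m s c e ei - G0p a b m s c e ei * F1p a b m s c e ei) /\
  Dp0 a b m s c e ei = F0p a b m s c e ei ^ 2 + G0p a b m s c e ei ^ 2.
Proof.
  unfold Np0, Dp0, F0p, G0p, F1p, G1p; split; ring.
Qed.

Lemma FG_pos (a b m s c e : R) : a <> 0 -> b <> 0 -> 0 < e -> s^2 + c^2 = 1 ->
  0 < F0p a b m s c e (1/e) ^ 2 + G0p a b m s c e (1/e) ^ 2.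
Proof.
  intros ha hb he hsc.
  destruct (Rle_or_lt (F0p a b m s c e (1/e) ^ 2 + G0p a b m s c e (1/e) ^ 2) 0) as [H|H]; [|exact H].
  exfalso.
  assert (hF : F0p a b m s c e (1/e) = 0) by nra.
  assert (hG : G0p a b m s c e (1/e) = 0) by nra.
  unfold F0p, G0p in *.
  assert (hbc : b * c = a * s - a * m * e).
  { apply (Rmult_eq_reg_l (-2 * b)); [|nra]. lra. }
  assert (hk : a * (1 + (a^2+b^2+m^2)*e^2 - 2*m*s*e) = 0).
  { replace (a * (1 + (a^2+b^2+m^2)*e^2 - 2*m*s*e)) with
      ((a * (1/e) + a * (a ^ 2 + b ^ 2 - m ^ 2) * e - 2 * m * (b * c)) * e + 2*m*e*(b*c - (a*s - a*m*e))).
    - rewrite hbc. replace (a * (1/e) + a * (a ^ 2 + b ^ 2 - m ^ 2) * e - 2 * m * (a * s - a * m * e))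
        with (a * (1/e) + a * (a ^ 2 + b ^ 2 - m ^ 2) * e - 2 * m * b * c) by (rewrite <- hbc; ring).
      rewrite hF. ring.
    - field. lra. }
  assert (hk2 : 1 + (a^2+b^2+m^2)*e^2 - 2*m*s*e = 0).
  { apply (Rmult_eq_reg_l a); [|exact ha]. rewrite hk. ring. }
  assert (hb2 : 0 < b^2 * e^2).
  { apply Rmult_lt_0_compat; apply pow2_gt_0; [exact hb | lra]. }
  assert (h1 : 0 <= (1 - m*s*e)^2) by apply pow2_ge_0.
  assert (h2 : 0 <= (m*e*c)^2) by apply pow2_ge_0.
  assert (h4 : 0 <= (a*e)^2) by apply pow2_ge_0.
  assert (1 + (a^2+b^2+m^2)*e^2 - 2*m*s*e = (1 - m*s*e)^2 + (m^2*e^2*1 - m^2*e^2*s^2) + a^2*e^2 + b^2*e^2) by ring.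
  assert (m^2*e^2*1 - m^2*e^2*s^2 = (m*e*c)^2).
  { replace 1 with (s^2+c^2) by exact hsc. ring. }
  assert ((a*e)^2 = a^2*e^2) by ring.
  lra.
Qed.

Lemma Dp0_pos (a b m s c e : R) : a <> 0 -> b <> 0 -> 0 < e -> s^2 + c^2 = 1 ->
  Dp0 a b m s c e ((s^2+c^2)/e) <> 0.
Proof.
  intros ha hb he hsc.
  destruct (NpD_eq a b m s c e ((s^2+c^2)/e)) as [_ HD].
  rewrite HD. rewrite hsc. apply Rgt_not_eq. apply FG_pos; auto.
Qed.

Lemma d_eq (f : R -> R) (x l1 l2 : R) : is_derive f x l1 -> l1 = l2 -> is_derive f x l2.
Proof. intros H <-; exact H. Qed.
Lemma d_plus (f g : R -> R) (x df dg : R) : is_derive f x df -> is_derive g x dg ->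
  is_derive (fun y => f y + g y) x (df + dg).
Proof. intros; apply (is_derive_plus f g); auto. Qed.
Lemma d_minus (f g : R -> R) (x df dg : R) : is_derive f x df -> is_derive g x dg ->
  is_derive (fun y => f y - g y) x (df - dg).
Proof. intros; apply (is_derive_minus f g); auto. Qed.
Lemma d_mult (f g : R -> R) (x df dg : R) : is_derive f x df -> is_derive g x dg ->
  is_derive (fun y => f y * g y) x (df * g x + f x * dg).
Proof. intros. eapply d_eq. apply (is_derive_mult (K := R_AbsRing) f g x df dg H H0).
  intros; apply Rmult_comm. reflexivity. Qed.
Lemma d_opp (f : R -> R) (x df : R) : is_derive f x df -> is_derive (fun y => - f y) x (- df).
Proof. intros; apply (is_derive_opp f); auto. Qed.
Lemma d_sq (f : R -> R) (x df : R) : is_derive f x df -> is_derive (fun y => f y ^ 2) x (2 * f x * df).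
Proof.
  intros H.
  assert (H2 : is_derive (fun y => f y * f y) x (2 * f x * df)).
  { eapply d_eq. apply (d_mult _ _ _ _ _ H H). ring. }
  revert H2. apply is_derive_ext. intro; simpl; ring.
Qed.
Lemma d_const (k x : R) : is_derive (fun _ => k) x 0.
Proof. apply (is_derive_const k). Qed.

Ltac dtac :=
  match goal with
  | |- is_derive (fun _ => ?k) _ _ => apply d_const
  | |- is_derive (fun y => @?u y + @?v y) _ _ => eapply d_plus; [dtac | dtac]
  | |- is_derive (fun y => @?u y - @?v y) _ _ => eapply d_minus; [dtac | dtac]
  | |- is_derive (fun y => @?u y * @?v y) _ _ => eapply d_mult; [dtac | dtac]
  | |- is_derive (fun y => - @?u y) _ _ => eapply d_opp; dtac
  | |- is_derive (fun y => @?u y ^ 2) _ _ => eapply d_sq; dtac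
  | |- is_derive (fun y => ?f y) _ _ => is_var f; match goal with H : forall x : _, is_derive f x _ |- _ => exact (H _) end
  | |- is_derive ?f _ _ => is_var f; match goal with H : forall x : _, is_derive f x _ |- _ => exact (H _) end
  end.

Lemma pder (a b m : R) (s c e ei : R -> R) :
  (forall x, is_derive s x (a * c x)) -> (forall x, is_derive c x (- a * s x)) ->
  (forall x, is_derive e x (b * e x)) -> (forall x, is_derive ei x (- b * ei x)) ->
  (forall x, is_derive (fun y => Np0 a b m (s y) (c y) (e y) (ei y)) x (Np1 a b m (s x) (c x) (e x) (ei x))) /\
  (forall x, is_derive (fun y => Np1 a b m (s y) (c y) (e y) (ei y)) x (Np2 a b m (s x) (c x) (e x) (ei x))) /\
  (forall x, is_derive (fun y => Np2 a b m (s y) (c y) (e y) (ei y)) x (Np3 a b m (s x) (c x) (e x) (ei x))) /\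
  (forall x, is_derive (fun y => Np3 a b m (s y) (c y) (e y) (ei y)) x (Np4 a b m (s x) (c x) (e x) (ei x))) /\
  (forall x, is_derive (fun y => Dp0 a b m (s y) (c y) (e y) (ei y)) x (Dp1 a b m (s x) (c x) (e x) (ei x))) /\
  (forall x, is_derive (fun y => Dp1 a b m (s y) (c y) (e y) (ei y)) x (Dp2 a b m (s x) (c x) (e x) (ei x))) /\
  (forall x, is_derive (fun y => Dp2 a b m (s y) (c y) (e y) (ei y)) x (Dp3 a b m (s x) (c x) (e x) (ei x))) /\
  (forall x, is_derive (fun y => Dp3 a b m (s y) (c y) (e y) (ei y)) x (Dp4 a b m (s x) (c x) (e x) (ei x))) /\
  (forall x, is_derive (fun y => F0p a b m (s y) (c y) (e y) (ei y)) x (F1p a b m (s x) (c x) (e x) (ei x))) /\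
  (forall x, is_derive (fun y => G0p a b m (s y) (c y) (e y) (ei y)) x (G1p a b m (s x) (c x) (e x) (ei x))).
Proof.
  intros hs hc he hei.
  repeat match goal with |- _ /\ _ => split end; intro x;
  unfold Np0, Np1, Np2, Np3, Np4, Dp0, Dp1, Dp2, Dp3, Dp4, F0p, G0p, F1p, G1p;
  (eapply d_eq; [dtac | cbv beta; ring]).
Qed.

Lemma conv (a b mu r3 B0 B1 B2 B4 W0 W1 W2 W4 : R) : r3 * r3 = 2 ->
  B0 = r3 * W0 -> B1 = r3 * W1 -> B2 = r3 * W2 -> B4 = r3 * W4 ->
  (let m := r3 * mu in
   W4 - 2*(b^2-a^2)*(W2 + 3*m*W0^2 + 2*W0^3) + (a^2+b^2)^2*W0 + 10*W0*W1^2 + 10*W0^2*W2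
   + 6*W0^5 + 5*m*W1^2 + 10*m*W0*W2 + 10*m^2*W0^3 + 15*m*W0^4 = 0) ->
    B4 - 2 * (b ^ 2 - a ^ 2) * (B2 + 3 * mu * B0 ^ 2 + B0 ^ 3)
    + (a ^ 2 + b ^ 2) ^ 2 * B0 + 5 * B0 * B1 ^ 2 + 5 * B0 ^ 2 * B2
    + 3 / 2 * B0 ^ 5 + 5 * mu * B1 ^ 2 + 10 * mu * B0 * B2
    + 10 * mu ^ 2 * B0 ^ 3 + 15 / 2 * mu * B0 ^ 4 = 0.
Proof.
  intros h3 e0 e1 e2 e4 HW; cbv zeta in HW; subst B0 B1 B2 B4.
  assert (E : forall r3 : R,
    r3 * W4 - 2 * (b ^ 2 - a ^ 2) * (r3 * W2 + 3 * mu * (r3 * W0) ^ 2 + (r3 * W0) ^ 3)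
    + (a ^ 2 + b ^ 2) ^ 2 * (r3 * W0) + 5 * (r3 * W0) * (r3 * W1) ^ 2 + 5 * (r3 * W0) ^ 2 * (r3 * W2)
    + 3 / 2 * (r3 * W0) ^ 5 + 5 * mu * (r3 * W1) ^ 2 + 10 * mu * (r3 * W0) * (r3 * W2)
    + 10 * mu ^ 2 * (r3 * W0) ^ 3 + 15 / 2 * mu * (r3 * W0) ^ 4
    = r3 * (W4 - 2*(b^2-a^2)*(W2 + 3*(r3*mu)*W0^2 + 2*W0^3) + (a^2+b^2)^2*W0 + 10*W0*W1^2 + 10*W0^2*W2
   + 6*W0^5 + 5*(r3*mu)*W1^2 + 10*(r3*mu)*W0*W2 + 10*(r3*mu)^2*W0^3 + 15*(r3*mu)*W0^4)
    + (r3*r3 - 2) * (-2*(b^2-a^2)*r3*W0^3 + 5*r3*W0*W1^2 + 5*r3*W0^2*W2 + 3/2*r3*(r3*r3+2)*W0^5 + 15/2*mu*r3*r3*W0^4)).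
  { intro; field. }
  rewrite E, HW, h3. ring.
Qed.

Lemma Wlem (a b m N0 N1 N2 N3 N4 D0 D1 D2 D3 D4 : R) : D0 <> 0 ->
  let p1 := N1*D0 - N0*D1 in
  let p2 := N2*D0^2 - N0*D0*D2 - 2*N1*D0*D1 + 2*N0*D1^2 in
  let p4 := N4*D0^4 - 6*N2*D0^3*D2 + 24*N1*D0^2*D1*D2 - 4*N1*D0^3*D3 - 36*N0*D0*D1^2*D2 + 6*N0*D0^2*D2^2 + 8*N0*D0^2*D1*D3 - N0*D0^3*D4 - 4*N3*D0^3*D1 + 12*N2*D0^2*D1^2 - 24*N1*D0*D1^3 + 24*N0*D1^4 in
  p4 - 2*(b^2-a^2)*(p2*D0^2 + 3*m*N0^2*D0^3 + 2*N0^3*D0^2) + (a^2+b^2)^2*N0*D0^4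
  + 10*N0*p1^2 + 10*N0^2*p2 + 6*N0^5 + 5*m*p1^2*D0 + 10*m*N0*p2*D0
  + 10*m^2*N0^3*D0^2 + 15*m*N0^4*D0 = 0 ->
  let W0 := N0 / D0 in let W1 := p1 / D0^2 in let W2 := p2 / D0^3 in let W4 := p4 / D0^5 in
   W4 - 2*(b^2-a^2)*(W2 + 3*m*W0^2 + 2*W0^3) + (a^2+b^2)^2*W0 + 10*W0*W1^2 + 10*W0^2*W2
   + 6*W0^5 + 5*m*W1^2 + 10*m*W0*W2 + 10*m^2*W0^3 + 15*m*W0^4 = 0.
Proof.
  intros hD p1 p2 p4 H W0 W1 W2 W4.
  subst W0 W1 W2 W4.
  match type of H with ?P = 0 => transitivity (P / D0^5) end.
  - subst p1 p2 p4. field. exact hD.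
  - rewrite H. field. exact hD.
Qed.

Lemma trig_der (a b r1 : R) (th : R -> R) : (forall y, is_derive th y a) -> r1 <> 0 ->
  forall y, is_derive (fun y => (a * sin (th y) + b * cos (th y)) / r1) y (a * ((a * cos (th y) - b * sin (th y)) / r1)) /\
            is_derive (fun y => (a * cos (th y) - b * sin (th y)) / r1) y (- a * ((a * sin (th y) + b * cos (th y)) / r1)).
Proof.
  intros hth hr y.
  assert (d : Derive (fun z => th z) y = a) by (apply is_derive_unique; apply hth).
  assert (ex : ex_derive (fun z => th z) y) by (eexists; apply hth).
  split; auto_derive; auto; rewrite d; field; exact hr.
Qed.

Lemma exp_der (b r2 : R) (z : R -> R) : (forall y, is_derive z y b) -> r2 <> 0 ->
  forall y, is_derive (fun y => exp (z y) / r2) y (b * (exp (z y) / r2)).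
Proof.
  intros hz hr y.
  assert (d : Derive (fun u => z u) y = b) by (apply is_derive_unique; apply hz).
  assert (ex : ex_derive (fun u => z u) y) by (eexists; apply hz).
  auto_derive; auto; rewrite d; field; exact hr.
Qed.

Theorem theorem3p6 (a b mu x1 x2 : R) :
  a <> 0 -> b <> 0 -> mu <> 0 -> gDelta a b mu > 0 ->
  forall t x : R,
    let B := breather a b mu x1 x2 t in
    let B0 := B x in
    let B1 := Derive_n B 1 x in
    let B2 := Derive_n B 2 x in
    let B4 := Derive_n B 4 x in
    B4 - 2 * (b ^ 2 - a ^ 2) * (B2 + 3 * mu * B0 ^ 2 + B0 ^ 3)
    + (a ^ 2 + b ^ 2) ^ 2 * B0 + 5 * B0 * B1 ^ 2 + 5 * B0 ^ 2 * B2
    + 3 / 2 * B0 ^ 5 + 5 * mu * B1 ^ 2 + 10 * mu * B0 * B2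
    + 10 * mu ^ 2 * B0 ^ 3 + 15 / 2 * mu * B0 ^ 4 = 0.
Proof.
  intros ha hb hmu hD t x.
  cbv zeta.
  assert (hab : 0 < a^2 + b^2) by (assert (0 < b^2) by (apply pow2_gt_0; exact hb); assert (0 <= a^2) by apply pow2_ge_0; lra).
  pose (r1 := sqrt (a^2+b^2)).
  pose (r2 := sqrt (gDelta a b mu)).
  pose (r3 := sqrt 2).
  pose (m := r3 * mu).
  assert (hr1 : 0 < r1) by (apply sqrt_lt_R0; exact hab).
  assert (hr1sq : r1 * r1 = a^2+b^2) by (apply sqrt_sqrt; lra).
  assert (hr2 : 0 < r2) by (apply sqrt_lt_R0; exact hD).
  assert (hr2sq : r2 * r2 = gDelta a b mu) by (apply sqrt_sqrt; lra).
  assert (hr3sq : r3 * r3 = 2) by (apply sqrt_sqrt; lra).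
  assert (hm : a^2+b^2-m^2 = r2*r2).
  { rewrite hr2sq. unfold m, gDelta.
    replace ((r3*mu)^2) with ((r3*r3)*mu^2) by ring. rewrite hr3sq. ring. }
  pose (th := fun y => a * (y + (a ^ 2 - 3 * b ^ 2) * t + x1)).
  pose (s := fun y => (a * sin (th y) + b * cos (th y)) / r1).
  pose (c := fun y => (a * cos (th y) - b * sin (th y)) / r1).
  pose (e := fun y => exp (b * (y + (3 * a ^ 2 - b ^ 2) * t + x2)) / r2).
  pose (ei := fun y => (s y ^ 2 + c y ^ 2) / e y).
  assert (hepos : forall y, 0 < e y).
  { intro y. unfold e. apply Rdiv_lt_0_compat; [apply exp_pos | exact hr2]. }
  assert (hsc : forall y, s y ^ 2 + c y ^ 2 = 1).
  { intro y. unfold s, c.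
    replace (((a * sin (th y) + b * cos (th y)) / r1) ^ 2 + ((a * cos (th y) - b * sin (th y)) / r1) ^ 2)
      with ((a^2+b^2) * (sin (th y) ^ 2 + cos (th y) ^ 2) / (r1 * r1)) by (field; lra).
    rewrite <- hr1sq.
    replace (sin (th y) ^ 2 + cos (th y) ^ 2) with 1 by (rewrite <- (sin2_cos2 (th y)); unfold Rsqr; ring).
    field. lra. }
  assert (hth : forall y, is_derive th y a).
  { intro y. unfold th. auto_derive; [exact I|]. ring. }
  assert (hs : forall y, is_derive s y (a * c y)).
  { intro y. apply (trig_der a b r1 th hth ltac:(lra) y). }
  assert (hc : forall y, is_derive c y (- a * s y)).
  { intro y. apply (trig_der a b r1 th hth ltac:(lra) y). }
  assert (he : forall y, is_derive e y (b * e y)).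
  { intro y. apply (exp_der b r2 (fun y => b * (y + (3 * a ^ 2 - b ^ 2) * t + x2))); [|lra].
    intro z. auto_derive; [exact I|]. ring. }
  assert (hei : forall y, is_derive ei y (- b * ei y)).
  { intro y. unfold ei.
    assert (hnz : e y <> 0) by (apply Rgt_not_eq; apply hepos).
    assert (ds : Derive (fun z => s z) y = a * c y) by (apply is_derive_unique; apply hs).
    assert (dc : Derive (fun z => c z) y = - a * s y) by (apply is_derive_unique; apply hc).
    assert (de : Derive (fun z => e z) y = b * e y) by (apply is_derive_unique; apply he).
    auto_derive.
    - repeat split; auto; eexists; eauto.
    - rewrite ds, dc, de. field. exact hnz. }
  destruct (pder a b m s c e ei hs hc he hei) as (dN0 & dN1 & dN2 & dN3 & dD0 & dD1 & dD2 & dD3 & dF & dG).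
  assert (hDnz : forall y, Dp0 a b m (s y) (c y) (e y) (ei y) <> 0).
  { intro y. apply Dp0_pos; auto. }
  assert (hF : forall y, gF a b mu x1 x2 t y = F0p a b m (s y) (c y) (e y) (ei y) / (2 * a * r2)).
  { intro y. unfold F0p, ei. rewrite hsc, hm. unfold gF, cosh. cbv zeta.
    fold r1 r2 r3. change (r3 * mu) with m. rewrite exp_Ropp.
    unfold c, e, th. field.
    repeat split; try lra; apply Rgt_not_eq; apply exp_pos. }
  assert (hG : forall y, gG a b mu x1 x2 t y = G0p a b m (s y) (c y) (e y) (ei y) / (2 * a * r2)).
  { intro y. unfold G0p, gG. cbv zeta.
    fold r1 r2 r3. rewrite <- hr2sq. change (r3 * mu) with m.
    replace (b * r1 / (a * r2)) with (b * (a^2+b^2) / (a * r2 * r1)) by (rewrite <- hr1sq; field; lra).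
    unfold s, c, e, th. field. lra. }
  assert (EF : forall y, Derive (gF a b mu x1 x2 t) y = F1p a b m (s y) (c y) (e y) (ei y) / (2 * a * r2)).
  { intro y. apply is_derive_unique.
    apply (is_derive_ext (fun z => F0p a b m (s z) (c z) (e z) (ei z) / (2 * a * r2))).
    { intro z; symmetry; apply hF. }
    eapply d_eq.
    { apply (d_mult (fun z => F0p a b m (s z) (c z) (e z) (ei z)) (fun _ => / (2*a*r2))); [apply dF | apply d_const]. }
    cbv beta. unfold Rdiv. ring. }
  assert (EG : forall y, Derive (gG a b mu x1 x2 t) y = G1p a b m (s y) (c y) (e y) (ei y) / (2 * a * r2)).
  { intro y. apply is_derive_unique.
    apply (is_derive_ext (fun z => G0p a b m (s z) (c z) (e z) (ei z) / (2 * a * r2))).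
    { intro z; symmetry; apply hG. }
    eapply d_eq.
    { apply (d_mult (fun z => G0p a b m (s z) (c z) (e z) (ei z)) (fun _ => / (2*a*r2))); [apply dG | apply d_const]. }
    cbv beta. unfold Rdiv. ring. }
  assert (hB : forall y, breather a b mu x1 x2 t y = r3 * (Np0 a b m (s y) (c y) (e y) (ei y) / Dp0 a b m (s y) (c y) (e y) (ei y))).
  { intro y. unfold breather. cbv zeta.
    rewrite EF, EG, hF, hG. change (sqrt 2) with r3.
    pose proof (hDnz y) as hz.
    destruct (NpD_eq a b m (s y) (c y) (e y) (ei y)) as [hN hDD]. rewrite hN, hDD. rewrite hDD in hz.
    set (F := F0p a b m (s y) (c y) (e y) (ei y)) in *.
    set (G := G0p a b m (s y) (c y) (e y) (ei y)) in *.
    set (F1 := F1p a b m (s y) (c y) (e y) (ei y)) in *.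
    set (G1 := G1p a b m (s y) (c y) (e y) (ei y)) in *.
    field. split; [exact hz|]. split; lra. }
  pose proof (quot_derivs r3
    (fun y => Np0 a b m (s y) (c y) (e y) (ei y)) (fun y => Np1 a b m (s y) (c y) (e y) (ei y))
    (fun y => Np2 a b m (s y) (c y) (e y) (ei y)) (fun y => Np3 a b m (s y) (c y) (e y) (ei y))
    (fun y => Np4 a b m (s y) (c y) (e y) (ei y))
    (fun y => Dp0 a b m (s y) (c y) (e y) (ei y)) (fun y => Dp1 a b m (s y) (c y) (e y) (ei y))
    (fun y => Dp2 a b m (s y) (c y) (e y) (ei y)) (fun y => Dp3 a b m (s y) (c y) (e y) (ei y))
    (fun y => Dp4 a b m (s y) (c y) (e y) (ei y))
    dN0 dN1 dN2 dN3 dD0 dD1 dD2 dD3 hDnz x) as (Q1 & Q2 & Q4).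
  cbv beta in Q1, Q2, Q4.
  rewrite (Derive_n_ext _ _ 1 x hB), (Derive_n_ext _ _ 2 x hB), (Derive_n_ext _ _ 4 x hB), (hB x).
  rewrite Q1, Q2, Q4.
  pose proof (hDnz x) as hz.
  pose proof (final a b m (s x) (c x) (e x) ltac:(apply Rgt_not_eq; apply hepos)) as HF.
  change ((s x ^ 2 + c x ^ 2) / e x) with (ei x) in HF.
  pose proof (Wlem a b m _ _ _ _ _ _ _ _ _ _ hz HF) as HW.
  cbv zeta in HW.
  set (N0 := Np0 a b m (s x) (c x) (e x) (ei x)) in *.
  set (N1 := Np1 a b m (s x) (c x) (e x) (ei x)) in *.
  set (N2 := Np2 a b m (s x) (c x) (e x) (ei x)) in *.
  set (N3 := Np3 a b m (s x) (c x) (e x) (ei x)) in *.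
  set (N4 := Np4 a b m (s x) (c x) (e x) (ei x)) in *.
  set (D0 := Dp0 a b m (s x) (c x) (e x) (ei x)) in *.
  set (D1 := Dp1 a b m (s x) (c x) (e x) (ei x)) in *.
  set (D2 := Dp2 a b m (s x) (c x) (e x) (ei x)) in *.
  set (D3 := Dp3 a b m (s x) (c x) (e x) (ei x)) in *.
  set (D4 := Dp4 a b m (s x) (c x) (e x) (ei x)) in *.
  eapply (conv a b mu r3); [exact hr3sq | | | | | exact HW]; unfold Rdiv; ring.
Qed.
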